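(* Let $G:\{0,1\}^n\to\{0,1\}^N$ be a Boolean circuit and $\mathsf{Ext}:\{0,1\}^N\times\{0,1\}^d\to\{0,1\}^m$ be linear, i.e., for each $r\in\{0,1\}^d$ the map $\mathsf{Ext}(\cdot,r):\mathbb{F}_2^N\to\mathbb{F}_2^m$ is $\mathbb{F}_2$-linear; for each $r$ fix a circuit $\mathsf{Ext}_r$ of fan-in-2 $\oplus$ gates computing $\mathsf{Ext}(\cdot,r)$, and let $C_r:\{0,1\}^n\to\{0,1\}^m$ be the circuit $C_r(s)=\mathsf{Ext}(G(s),r)$ obtained by feeding the outputs of $G$ into $\mathsf{Ext}_r$. Then for every $y\in\{0,1\}^N$ and $r\in\{0,1\}^d$, there is a simple parity reduction from $\tau_y(G)$ to $\tau_z(C_r)$, where $z:=\mathsf{Ext}(y,r)$; that is, $\tau_y(G)\le^{\oplus}\tau_z(C_r)$.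
   Context: For a circuit $G$ with $n$ inputs and $\ell$ outputs, whose gates have fan-in at most 2 over a basis containing $\oplus$, and $b\in\{0,1\}^\ell$, $\tau_b(G)$ is the 3-CNF with variables $x\in\{0,1\}^n$ (inputs) and $\mathsf{hist}\in\{0,1\}^s$, one variable $v_g$ per internal gate $g$ (including output gates; for input gates $v_g$ is the corresponding $x_i$). For every internal gate $g$ with operation $\circ_g$ and children $g_l,g_r$ it contains the clauses of the constraint $v_g=v_{g_l}\circ_g v_{g_r}$ (a 3-CNF of at most 8 clauses), and for each $i\in[\ell]$ with $i$-th output gate $g_i$ it contains the width-1 clause expressing $v_{g_i}=b_i$. Thus $\tau_b(G)$ is satisfiable iff $b\in\mathrm{Range}(G)$. Simple parity reduction: for CNFs $F(x_1,\dots,x_n)$ and $H(y_1,\dots,y_{n'})$, $F\le^{\oplus}H$ if there is an $\mathbb{F}_2$-linear map $\mathsf{redu}:\{0,1\}^n\to\{0,1\}^{n'}$ (each output bit is the XOR of a subset of input bits) such that for every clause $g$ of $H$, one of the following holds: $g\circ\mathsf{redu}\equiv\mathsf{True}$; $g\circ\mathsf{redu}$ equals some clause of $F$; or $g$ is a width-1 clause (a single literal, i.e., an equation $y_i=c$) and $g\circ\mathsf{redu}$ (a linear equation) is the XOR (sum over $\mathbb{F}_2$) of a subset of clauses of $F$, these clauses being width-1. *)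

(* Defs.v *)
From mathcomp Require Import all_boot.
Set Implicit Arguments. Unset Strict Implicit. Unset Printing Implicit Defensive.

Definition literal := (nat * bool)%type.
Definition clause := seq literal.
Record cnf := CNF { nvars : nat; clauses : seq clause }.

Definition eval_lit (a : nat -> bool) (l : literal) : bool := a l.1 == l.2.
Definition eval_clause (a : nat -> bool) (C : clause) : bool := has (eval_lit a) C.
(* F2 affine form of a literal: it vanishes iff the literal holds,
   i.e. literal (i,c) is the linear equation x_i + c = 0. *)
Definition lit_form (a : nat -> bool) (l : literal) : bool := a l.1 (+) l.2.

(** * Circuits: nodes 0..cin-1 are inputs, node cin+k is the k-th gate;
    each gate has two children (fan-in <= 2) and an arbitrary binary operation. *)
Record gate := Gate { gl : nat; gr : nat; gop : bool -> bool -> bool }.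
Record circuit := Circuit { cin : nat; gates : seq gate; outs : seq nat }.

Definition gate0 := Gate 0 0 (fun _ _ => false).

Definition wf_circuit (C : circuit) : Prop :=
  (forall k, k < size (gates C) ->
     gl (nth gate0 (gates C) k) < cin C + k /\ gr (nth gate0 (gates C) k) < cin C + k) /\
  all (fun o => o < cin C + size (gates C)) (outs C).

Definition xor_circuit (C : circuit) : Prop :=
  forall k, k < size (gates C) -> forall a b, gop (nth gate0 (gates C) k) a b = a (+) b.

Definition eval_nodes (C : circuit) (x : seq bool) : seq bool :=
  foldl (fun vals g => rcons vals (gop g (nth false vals (gl g)) (nth false vals (gr g))))
        x (gates C).
Definition eval_circ (C : circuit) (x : seq bool) : seq bool :=
  [seq nth false (eval_nodes C x) o | o <- outs C].

(* the constraint v = gl g `op` gr g, as the 4 width-3 clauses excluding each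
   falsifying assignment *)
Definition gate_clauses (v : nat) (g : gate) : seq clause :=
  [seq [:: (gl g, ~~ p.1); (gr g, ~~ p.2); (v, gop g p.1 p.2)]
  | p <- [:: (false, false); (false, true); (true, false); (true, true)]].

Definition tau (C : circuit) (b : seq bool) : cnf :=
  CNF (cin C + size (gates C))
      (flatten [seq gate_clauses (cin C + k) (nth gate0 (gates C) k)
               | k <- iota 0 (size (gates C))]
       ++ [seq [:: (nth 0 (outs C) i, nth false b i)] | i <- iota 0 (size (outs C))]).

(* redu j = the subset of F-variables whose XOR is the j-th H-variable *)
Definition xor_vars (a : nat -> bool) (S : seq nat) : bool :=
  foldr (fun i acc => a i (+) acc) false S.
Definition redu_assign (redu : nat -> seq nat) (a : nat -> bool) : nat -> bool :=
  fun j => xor_vars a (redu j).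

Definition simple_parity_red (F H : cnf) : Prop :=
  exists redu : nat -> seq nat,
    (forall j, j < nvars H -> all (fun i => i < nvars F) (redu j)) /\
    forall g, g \in clauses H ->
      [\/ (forall a, eval_clause (redu_assign redu a) g),
          (exists2 f, f \in clauses F &
              forall a, eval_clause (redu_assign redu a) g = eval_clause a f)
        | size g = 1 /\
          exists S : seq nat,
            [/\ uniq S, all (fun k => k < size (clauses F)) S,
                all (fun k => size (nth [::] (clauses F) k) == 1) S &
                forall a, lit_form (redu_assign redu a) (head (0, false) g) =
                  foldr (fun k acc =>
                           lit_form a (head (0, false) (nth [::] (clauses F) k)) (+) acc)
                        false S]].

Definition shift_node (G E : circuit) (k : nat) : nat :=
  if k < cin E then nth 0 (outs G) k else k - cin E + (cin G + size (gates G)).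

Definition compose (G E : circuit) : circuit :=
  Circuit (cin G)
          (gates G ++ [seq Gate (shift_node G E (gl g)) (shift_node G E (gr g)) (gop g)
                      | g <- gates E])
          [seq shift_node G E o | o <- outs E].

Definition xorv (u v : seq bool) : seq bool := [seq p.1 (+) p.2 | p <- zip u v].

(* Main.v *)
Require Import Defs.
From mathcomp Require Import all_boot zify.

Definition stepf (vals : seq bool) (g : gate) :=
  rcons vals (gop g (nth false vals (gl g)) (nth false vals (gr g))).

Lemma foldl_ext gs vals : exists t, foldl stepf vals gs = vals ++ t /\ size t = size gs.
Proof.
elim: gs vals => [|g gs IH] vals /=; first by exists [::]; rewrite cats0.
have [t [-> st]] := IH (stepf vals g).
by exists ((gop g (nth false vals (gl g)) (nth false vals (gr g))) :: t);
  rewrite /stepf cat_rcons /= st.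
Qed.

Lemma ev_pre C x v : v < size x -> nth false (eval_nodes C x) v = nth false x v.
Proof.
move=> Hv; have [t [E _]] := foldl_ext (gates C) x.
by rewrite /eval_nodes -/stepf E nth_cat Hv.
Qed.

Lemma ev_gate C x k : k < size (gates C) ->
  gl (nth gate0 (gates C) k) < size x + k -> gr (nth gate0 (gates C) k) < size x + k ->
  nth false (eval_nodes C x) (size x + k) =
  gop (nth gate0 (gates C) k) (nth false (eval_nodes C x) (gl (nth gate0 (gates C) k)))
      (nth false (eval_nodes C x) (gr (nth gate0 (gates C) k))).
Proof.
set g := nth gate0 (gates C) k => Hk Hl Hr.
rewrite /eval_nodes -/stepf -(cat_take_drop k (gates C)) foldl_cat (drop_nth gate0 Hk) -/g /=.
set V := foldl stepf x (take k (gates C)).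
have [t [sV st]] := foldl_ext (take k (gates C)) x.
have sV' : size V = size x + k by rewrite /V sV size_cat st size_take Hk.
have [t' [E _]] := foldl_ext (drop k.+1 (gates C)) (stepf V g).
rewrite E /stepf.
have nthr : forall j, j < size x + k -> nth false
   (rcons V (gop g (nth false V (gl g)) (nth false V (gr g))) ++ t') j = nth false V j.
  move=> j Hj; rewrite nth_cat size_rcons ltnS sV' (ltnW Hj) nth_rcons sV' Hj //.
rewrite (nthr _ Hl) (nthr _ Hr) nth_cat size_rcons sV' ltnSn nth_rcons sV' ltnn eqxx //.
Qed.

Definition unitv N j := mkseq (fun i => i == j) N.
Definition coef E N v j := nth false (eval_nodes E (unitv N j)) v.
Definition linf N (c : nat -> bool) (f : nat -> bool) :=
  \big[addb/false]_(j <- iota 0 N) (c j && f j).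

Lemma coef_in E N v j : v < N -> coef E N v j = (v == j).
Proof.
by move=> Hv; rewrite /coef ev_pre ?size_mkseq // /unitv nth_mkseq.
Qed.

Lemma ev_gate' E x N k : wf_circuit E -> xor_circuit E -> cin E = N -> size x = N ->
  k < size (gates E) ->
  nth false (eval_nodes E x) (N + k) =
  nth false (eval_nodes E x) (gl (nth gate0 (gates E) k)) (+)
  nth false (eval_nodes E x) (gr (nth gate0 (gates E) k)).
Proof.
move=> [wf1 _] xE cE sx Hk; have [h1 h2] := wf1 k Hk.
rewrite cE in h1 h2.
rewrite -sx ev_gate ?sx //; exact: xE.
Qed.

Lemma coef_gate E N k j : wf_circuit E -> xor_circuit E -> cin E = N ->
  k < size (gates E) ->
  coef E N (N + k) j = coef E N (gl (nth gate0 (gates E) k)) j (+)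
                       coef E N (gr (nth gate0 (gates E) k)) j.
Proof.
move=> w xE cE Hk; rewrite /coef ev_gate' // size_mkseq //.
Qed.

Lemma lin_unit N v f : v < N -> linf N (fun j => v == j) f = f v.
Proof.
move=> Hv; rewrite /linf (bigD1_seq v) ?mem_iota ?iota_uniq //= eqxx andTb.
rewrite big1 ?addbF // => j /negbTE; rewrite eq_sym => ->; by [].
Qed.

Lemma lin_xor N c1 c2 f :
  linf N (fun j => c1 j (+) c2 j) f = linf N c1 f (+) linf N c2 f.
Proof.
rewrite /linf -big_split /=; apply: eq_bigr => j _.
by case: (c1 j); case: (c2 j); case: (f j).
Qed.

Lemma lin_eval E N x v : wf_circuit E -> xor_circuit E -> cin E = N -> size x = N ->
  v < N + size (gates E) ->
  nth false (eval_nodes E x) v = linf N (coef E N v) (nth false x).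
Proof.
move=> w xE cE sx; elim/ltn_ind: v => v IH Hv.
case: (ltnP v N) => HvN.
  rewrite ev_pre ?sx //.
  transitivity (linf N (fun j => v == j) (nth false x)); first by rewrite lin_unit.
  by apply: eq_bigr => j _; rewrite coef_in.
have [k Ev] : exists k, v = N + k by exists (v - N); rewrite subnKC.
subst v.
have Hk : k < size (gates E) by move: Hv; rewrite ltn_add2l.
have [h1 h2] := (proj1 w) k Hk; rewrite cE in h1 h2.
have h1' := ltn_trans h1 Hv; have h2' := ltn_trans h2 Hv.
rewrite ev_gate' // !IH //.
rewrite -lin_xor; apply: eq_bigr => j _; rewrite coef_gate //.
Qed.

Lemma fold_big (f : nat -> bool) s :
  foldr (fun k acc => f k (+) acc) false s = \big[addb/false]_(k <- s) f k.
Proof. by elim: s => [|x s IH] /=; rewrite ?big_nil ?big_cons ?IH. Qed.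

Lemma big_cond_lin N c f :
  \big[addb/false]_(j <- iota 0 N | c j) f j = linf N c f.
Proof. by rewrite big_mkcond; apply: eq_bigr => j _; case: (c j). Qed.

Lemma size_fl (f : nat -> seq clause) s : (forall k, size (f k) = 4) ->
  size (flatten (map f s)) = 4 * size s.
Proof. by move=> H; elim: s => [|x s IH] //=; rewrite size_cat IH H mulnS. Qed.

Theorem claim3p4 (n N d m : nat) (G : circuit)
  (Ext : seq bool -> seq bool -> seq bool) (ExtC : seq bool -> circuit) :
  wf_circuit G -> cin G = n -> size (outs G) = N ->
  (forall u r, size u = N -> size r = d -> size (Ext u r) = m) ->
  (forall u v r, size u = N -> size v = N -> size r = d ->
     Ext (xorv u v) r = xorv (Ext u r) (Ext v r)) ->
  (forall r, size r = d ->
     [/\ cin (ExtC r) = N, size (outs (ExtC r)) = m, wf_circuit (ExtC r),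
         xor_circuit (ExtC r) &
         forall u, size u = N -> eval_circ (ExtC r) u = Ext u r]) ->
  forall y r, size y = N -> size r = d ->
    simple_parity_red (tau G y) (tau (compose G (ExtC r)) (Ext y r)).
Proof.
move=> wfG cG sG sExt linExt hE y r sy sr.
have [cE oE wfE xE evE] := hE r sr.
set E := ExtC r in cE oE wfE xE evE *.
set B := cin G + size (gates G).
have outsB : forall j, j < N -> nth 0 (outs G) j < B.
  move=> j Hj; apply: (allP (proj2 wfG)); apply: mem_nth; by rewrite sG.
pose redu w := if w < B then [:: w]
  else [seq nth 0 (outs G) j | j <- iota 0 N & coef E N (N + (w - B)) j].
have low : forall a w, w < B -> redu_assign redu a w = a w.
  by move=> a w Hw; rewrite /redu_assign /redu Hw /= addbF.
have key : forall a u, u < N + size (gates E) ->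
    redu_assign redu a (shift_node G E u) = linf N (coef E N u) (fun j => a (nth 0 (outs G) j)).
  move=> a u Hu; rewrite /shift_node cE; case: ifP => HuN.
    rewrite low ?outsB // -(lin_unit N u (fun j => a (nth 0 (outs G) j)) HuN).
    by apply: eq_bigr => j _; rewrite coef_in.
  have HB : (u - N + B < B) = false by apply/negbTE; rewrite -leqNgt leq_addl.
  rewrite /redu_assign /redu HB /xor_vars.
  have -> : N + (u - N + B - B) = u by rewrite addnK subnKC // leqNgt HuN.
  by rewrite (fold_big a) big_map big_filter big_cond_lin.
exists redu; split.
  move=> j _; rewrite /redu; case: ifP => Hj /=; first by rewrite Hj.
  apply/allP => i /mapP [j' Hj' ->]; apply: outsB.
  by move: Hj'; rewrite mem_filter mem_iota => /andP [_ /andP [_]].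
move=> g; rewrite /tau /= mem_cat => /orP [].
  move=> /flattenP [cs /mapP [k Hk ->] Hg].
  rewrite mem_iota size_cat size_map /= in Hk.
  case: (ltnP k (size (gates G))) => HkG.
    rewrite nth_cat HkG in Hg.
    apply: Or32; exists g.
      rewrite mem_cat; apply/orP; left; apply/flattenP.
      exists (gate_clauses (cin G + k) (nth gate0 (gates G) k)) => //.
      by apply: map_f; rewrite mem_iota.
    have [h1 h2] := (proj1 wfG) k HkG.
    have h3 : cin G + k < B by rewrite /B ltn_add2l.
    move: Hg => /mapP [p _ ->] a.
    rewrite /eval_clause /= /eval_lit /= !low //; lia.
  have HkE : k - size (gates G) < size (gates E) by lia.
  rewrite nth_cat ltnNge HkG /= (nth_map gate0) // in Hg.
  set g' := nth gate0 (gates E) (k - size (gates G)) in Hg.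
  have [h1 h2] := (proj1 wfE) _ HkE; rewrite cE -/g' in h1 h2.
  have Ev : cin G + k = shift_node G E (N + (k - size (gates G))).
    rewrite /shift_node cE ltnNge leq_addr /= /B; lia.
  apply: Or31; move: Hg => /mapP [p _ ->] a.
  rewrite /eval_clause /= /eval_lit /= Ev !key; try lia.
  have Hc : forall f, linf N (coef E N (N + (k - size (gates G)))) f =
      linf N (coef E N (gl g')) f (+) linf N (coef E N (gr g')) f.
    by move=> f; rewrite -lin_xor; apply: eq_bigr => j _; rewrite coef_gate.
  rewrite Hc (xE _ HkE).
  move: (linf N (coef E N (gl g')) _) => A1.
  move: (linf N (coef E N (gr g')) _) => A2.
  by case: p => [[] []]; case: A1; case: A2.
move=> /mapP [i Hi ->]; rewrite mem_iota size_map /= in Hi.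
have Hi' : i < size (outs E) by lia.
set o := nth 0 (outs E) i.
have Ho : o < N + size (gates E).
  have := allP (proj2 wfE) o (mem_nth 0 Hi'); by rewrite cE.
have nthF : forall j, j < N -> nth [::] (clauses (tau G y)) (4 * size (gates G) + j) =
    [:: (nth 0 (outs G) j, nth false y j)].
  move=> j Hj; rewrite /tau /= nth_cat size_fl; last by move=> k; rewrite size_map.
  rewrite size_iota ltnNge leq_addr /= addKn (nth_map 0) ?size_iota ?sG //.
  by rewrite nth_iota ?sG.
have sF : size (clauses (tau G y)) = 4 * size (gates G) + N.
  rewrite /tau /= size_cat size_fl; last by move=> k; rewrite size_map.
  by rewrite size_map !size_iota sG.
apply: Or33; split => //.
exists [seq 4 * size (gates G) + j | j <- iota 0 N & coef E N o j]; split.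
- by rewrite map_inj_uniq ?filter_uniq ?iota_uniq //; apply: addnI.
- apply/allP => k /mapP [j]; rewrite mem_filter mem_iota => /andP [_ /andP [_ Hj]] ->.
  by rewrite sF ltn_add2l.
- apply/allP => k /mapP [j]; rewrite mem_filter mem_iota => /andP [_ /andP [_ Hj]] ->.
  by rewrite nthF.
move=> a.
rewrite /= (nth_map 0) // -/o {1}/lit_form /= key // -(evE y sy) /eval_circ (nth_map 0) // -/o.
rewrite (lin_eval E N y o wfE xE cE sy Ho).
rewrite (fold_big (fun k => lit_form a (head (0, false) (nth [::] (clauses (tau G y)) k)))).
rewrite big_map big_filter.
rewrite big_cond_lin /linf -big_split big_seq [RHS]big_seq; apply: eq_bigr => j.
rewrite mem_iota => /andP [_ Hj]; rewrite nthF //= /lit_form /=.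
by case: (coef E N o j).
Qed.
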